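(* Assume $\mathfrak p=\mathfrak c$. Then every independent family $\mathcal I_0$ with $|\mathcal I_0|<\mathfrak c$ can be extended to a selective independent family. In particular, $\mathfrak p=\mathfrak c$ implies that selective maximal independent families exist.
   Context: $\mathfrak p$ is the pseudointersection number and $\mathfrak c=2^{\aleph_0}$. Independent family: $\mathcal I\subseteq[\omega]^\omega$ such that for all finite disjoint $\mathcal A,\mathcal B\subseteq\mathcal I$, $\bigcap\mathcal A\setminus\bigcup\mathcal B$ is infinite. $\mathsf{FF}(\mathcal I)$: finite partial functions $h:\mathcal I\to 2$; $\mathcal I^h:=\bigcap_{A\in\mathrm{dom}(h)}A^{h(A)}$, $A^0=A$, $A^1=\omega\setminus A$. Densely maximal: for every $X\in[\omega]^\omega$ and $h\in\mathsf{FF}(\mathcal I)$ there is $h'\supseteq h$ in $\mathsf{FF}(\mathcal I)$ with $\mathcal I^{h'}\setminus X$ or $\mathcal I^{h'}\cap X$ finite (densely maximal families are maximal independent). Density filter $\mathrm{fil}(\mathcal I)$: all $X\in[\omega]^\omega$ such that for every $h\in\mathsf{FF}(\mathcal I)$ there is $h'\supseteq h$ with $\mathcal I^{h'}\setminus X$ finite. $P$-filter: every countable subfamily has a pseudointersection in the filter. $Q$-filter: for every partition of $\omega$ into finite sets $\{I_n\}$ there is a member $A$ with $|A\cap I_n|\le1$ for all $n$. An independent family is selective if it is densely maximal and its density filter is both a $P$-filter and a $Q$-filter. *)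

(* Defs.v *)
From HB Require Import structures.
From mathcomp Require Import all_boot all_order.
From mathcomp Require Import boolp classical_sets cardinality.
Set Implicit Arguments. Unset Strict Implicit. Unset Printing Implicit Defensive.
Local Open Scope classical_set_scope.
Local Open Scope card_scope.

(* |F| < c, where c = 2^aleph0 = |P(omega)| *)
Definition card_lt_c {T} (F : set T) : Prop :=
  F #<= [set: set nat] /\ ~ ([set: set nat] #<= F).

Definition pseudoint (F : set (set nat)) (Y : set nat) : Prop :=
  infinite_set Y /\ forall X, F X -> finite_set (Y `\` X).

Definition SFIP (F : set (set nat)) : Prop :=
  forall G : set (set nat), finite_set G -> G `<=` F ->
    infinite_set (\bigcap_(X in G) X).

(* p is the least size of an SFIP family in [omega]^omega with no pseudointersection *)
Definition p_witness (F : set (set nat)) : Prop :=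
  (forall X, F X -> infinite_set X) /\ SFIP F /\ ~ (exists Y, pseudoint F Y).

Definition p_eq_c : Prop :=
  (forall F, p_witness F -> ~ card_lt_c F) /\
  (exists F, p_witness F /\ F #= [set: set nat]).

Definition independent (I : set (set nat)) : Prop :=
  (forall A, I A -> infinite_set A) /\
  forall A B : set (set nat), finite_set A -> finite_set B ->
    A `<=` I -> B `<=` I -> A `&` B = set0 ->
    infinite_set ((\bigcap_(X in A) X) `\` (\bigcup_(X in B) X)).

(* FF(I): finite partial functions I -> 2, given by a finite domain D and values h *)
Definition FF (I : set (set nat)) (D : set (set nat)) (h : set nat -> bool) : Prop :=
  finite_set D /\ D `<=` I.

Definition ff_ext (D : set (set nat)) (h : set nat -> bool)
    (D' : set (set nat)) (h' : set nat -> bool) : Prop :=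
  D `<=` D' /\ forall A, D A -> h' A = h A.

Definition setpow (A : set nat) (b : bool) : set nat := if b then ~` A else A.

Definition Ih (D : set (set nat)) (h : set nat -> bool) : set nat :=
  \bigcap_(A in D) setpow A (h A).

Definition densely_maximal (I : set (set nat)) : Prop :=
  independent I /\
  forall X : set nat, infinite_set X ->
  forall D h, FF I D h -> exists D' h', FF I D' h' /\ ff_ext D h D' h' /\
    (finite_set (Ih D' h' `\` X) \/ finite_set (Ih D' h' `&` X)).

Definition density_filter (I : set (set nat)) : set (set nat) :=
  [set X | infinite_set X /\
    forall D h, FF I D h -> exists D' h', FF I D' h' /\ ff_ext D h D' h' /\
      finite_set (Ih D' h' `\` X)].

Definition P_filter (F : set (set nat)) : Prop :=
  forall C : set (set nat), C `<=` F -> countable C ->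
    exists Y, F Y /\ pseudoint C Y.

Definition finite_partition (P : nat -> set nat) : Prop :=
  (forall n, finite_set (P n)) /\
  (forall m n, m <> n -> P m `&` P n = set0) /\
  (\bigcup_n P n = [set: nat]).

Definition Q_filter (F : set (set nat)) : Prop :=
  forall P : nat -> set nat, finite_partition P ->
    exists A, F A /\ forall n x y, A x -> A y -> P n x -> P n y -> x = y.

Definition selective (I : set (set nat)) : Prop :=
  densely_maximal I /\ P_filter (density_filter I) /\ Q_filter (density_filter I).

(* Main.v *)
Require Import Defs.
From mathcomp Require Import all_boot all_order.
From mathcomp Require Import boolp classical_sets cardinality.
From mathcomp Require Import zify.
From mathcomp Require wochoice.
Set Implicit Arguments. Unset Strict Implicit. Unset Printing Implicit Defensive.
Local Open Scope classical_set_scope.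
Local Open Scope card_scope.

Lemma finite_seqE {T : choiceType} (A : set T) :
  finite_set A -> exists s : seq T, A = [set x | x \in s].
Proof.
move=> /finite_fsetP[X ->]; exists (finmap.enum_fset X).
by apply/funext => x; apply/propext; split.
Qed.

Lemma fin_bounded (A : set nat) : finite_set A -> exists n, forall m, A m -> (m < n)%N.
Proof.
move=> /finite_seqE[s ->]; exists (\max_(i <- s) i).+1 => m /= ms.
by rewrite ltnS; apply: (@leq_bigmax_seq _ _ xpredT (fun i => i)).
Qed.

Lemma unbounded_infinite (A : set nat) :
  (forall n, exists m, (n <= m)%N /\ A m) -> infinite_set A.
Proof.
move=> H /fin_bounded[n Hn]; have [m [nm Am]] := H n.
by have := Hn _ Am; rewrite ltnNge nm.
Qed.

Lemma infinite_unbounded (A : set nat) :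
  infinite_set A -> forall n, exists m, (n <= m)%N /\ A m.
Proof.
move=> Ai n; apply: contra_notP Ai => H.
apply: (@sub_finite_set _ _ `I_n); last exact: finite_II.
move=> m Am /=; rewrite ltnNge; apply/negP => nm; apply: H; by exists m.
Qed.

Lemma infinite_setD_fin {T} (A B : set T) :
  infinite_set A -> finite_set B -> infinite_set (A `\` B).
Proof.
move=> Ai Bf Df; apply: Ai.
have -> : A = (A `\` B) `|` (A `&` B).
  by apply/funext=> x; apply/propext; split=> [Ax|[[]|[]]//];
     case: (pselect (B x)) => Bx; [right|left].
by rewrite finite_setU; split=> //; exact: finite_setIr.
Qed.

Lemma infinite_sub {T} (A B : set T) : A `<=` B -> infinite_set A -> infinite_set B.
Proof. by move=> AB Ai Bf; apply: Ai; exact: sub_finite_set Bf. Qed.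

Lemma infinite_nonempty {T} (A : set T) : infinite_set A -> exists x, A x.
Proof.
move=> Ai; apply: contra_notP Ai => H; suff -> : A = set0 by exact: finite_set0.
by apply/funext=> x; apply/propext; split=> // Ax; apply: H; exists x.
Qed.

Lemma pickle_inj {T : countType} : injective (@pickle T).
Proof. exact: pcan_inj pickleK. Qed.

Definition big {T} (A : set T) := exists f : set nat -> T, (forall X, A (f X)) /\ injective f.
Definition small {T} (A : set T) := ~ big A.

Lemma big_card (A : set (set nat)) : ([set: set nat] #<= A) <-> big A.
Proof.
split.
  move=> /pcard_leP /injfunPex [f ff fi]; exists f; split.
    by move=> X; apply: ff.
  by move=> X Y E; apply: fi; rewrite ?inE.
move=> [f [fA fi]]; apply/pcard_leP/injfunPex; exists f.
  by move=> X _; apply: fA.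
by move=> X Y _ _; apply: fi.
Qed.

Lemma small_sub {T} (A B : set T) : A `<=` B -> small B -> small A.
Proof. by move=> AB sB [f [fA fi]]; apply: sB; exists f; split=> // X; apply: AB. Qed.

Lemma small_image {T U} (f : T -> U) (A : set T) : small A -> small (f @` A).
Proof.
move=> sA [g [gA gi]]; apply: sA.
have H : forall X, exists a, A a /\ f a = g X by move=> X; have [a Aa e] := gA X; exists a.
pose k X := proj1_sig (cid (H X)).
exists k; split; first by move=> X; rewrite /k; case: cid => a [].
move=> X Y e; apply: gi.
rewrite -(proj2 (proj2_sig (cid (H X)))) -(proj2 (proj2_sig (cid (H Y)))).
by rewrite -/(k X) -/(k Y) e.
Qed.

Lemma small_inj {T U} (f : T -> U) (A : set T) : injective f -> small (f @` A) -> small A.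
Proof.
move=> fi sA [g [gA gi]]; apply: sA; exists (f \o g); split.
  by move=> X; exists (g X).
by move=> X Y /fi /gi.
Qed.

Definition e2 (X Y : set nat) : set nat :=
  [set n | if odd n then Y n./2 else X n./2].

Lemma e2_inj X Y X' Y' : e2 X Y = e2 X' Y' -> X = X' /\ Y = Y'.
Proof.
move=> E; split; apply/funext => n; apply/propext.
  have := congr1 (fun S => S n.*2) E; rewrite /e2 /= odd_double doubleK => ->//.
have := congr1 (fun S => S n.*2.+1) E; rewrite /e2 /= odd_double /= uphalf_double => ->//.
Qed.

Lemma small_U {T} (A B : set T) : small A -> small B -> small (A `|` B).
Proof.
move=> sA sB [g [gAB gi]].
case: (pselect (forall X, exists Y, B (g (e2 X Y)))) => [H|H].
  apply: sB; pose k X := proj1_sig (cid (H X)).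
  exists (fun X => g (e2 X (k X))); split; first by move=> X; rewrite /k; case: cid.
  by move=> X Y /gi /e2_inj[].
apply: sA; have [X0 HX0] : exists X0, forall Y, ~ B (g (e2 X0 Y)).
  apply: contra_notP H => H X; apply: contra_notP H => H'; exists X => Y BY.
  by apply: H'; exists Y.
exists (fun Y => g (e2 X0 Y)); split.
  by move=> Y; case: (gAB (e2 X0 Y)) => // /HX0.
by move=> Y Y' /gi /e2_inj[].
Qed.

Definition ew (f : nat -> set nat) : set nat :=
  [set k | exists n m, k = pickle (n, m) /\ f n m].

Lemma ew_inj : injective ew.
Proof.
move=> f g E; apply/funext => n; apply/funext => m; apply/propext.
have H : forall f n m, ew f (pickle (n, m)) <-> f n m.
  move=> h a b; split; last by move=> hab; exists a, b.
  by move=> [a' [b' [/pickle_inj[-> ->]]]].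
by rewrite -H E H.
Qed.

Lemma small_bigcup {T} (F : nat -> set T) :
  (forall n, small (F n)) -> small (\bigcup_n F n).
Proof.
move=> sF [g [gF gi]].
case: (pselect (forall n, exists Y, forall f, F n (g (ew f)) -> f n <> Y)) => [H|H].
  pose Yn n := proj1_sig (cid (H n)).
  have [n _ Fn] := gF (ew Yn).
  by have := proj2_sig (cid (H n)) Yn Fn; apply.
have [n Hn] : exists n, forall Y, exists f, F n (g (ew f)) /\ f n = Y.
  apply: contra_notP H => H n; apply: contra_notP H => H'; exists n => Y.
  apply: contra_notP H' => H'; exists Y => f Ff fY; apply: H'; by exists f.
apply: (sF n); pose k Y := proj1_sig (cid (Hn Y)).
exists (fun Y => g (ew (k Y))); split; first by move=> Y; rewrite /k; case: cid => ? [].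
move=> Y Y' /gi /ew_inj E.
have := proj2 (proj2_sig (cid (Hn Y))); have := proj2 (proj2_sig (cid (Hn Y'))).
by rewrite -/(k Y) -/(k Y') E => -> ->.
Qed.

Lemma small_nat : small [set: nat].
Proof.
move=> [g [_ gi]].
pose D := [set n | exists X, g X = n /\ ~ X n].
case: (pselect (D (g D))) => H.
  by have [X [/gi E]] := H; rewrite E.
by apply: (H); exists D.
Qed.

Lemma small_range {T} (f : nat -> T) : small (range f).
Proof. exact: small_image small_nat. Qed.

Lemma small_card_lt (F : set (set nat)) : small F <-> card_lt_c F.
Proof.
split; first by move=> sF; split; [exact: card_leT | move=> /big_card].
by move=> [_ H] /big_card.
Qed.
Lemma PI (pc : p_eq_c) (F : set (set nat)) : small F -> SFIP F ->
  exists Y, pseudoint F Y.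
Proof.
move=> sF sfF; apply: contrapT => H.
have Hw : p_witness F.
  split; last by split.
  move=> X FX; have := sfF [set X] (finite_set1 X).
  by rewrite bigcap_set1; apply => ? ->.
exact: (pc.1 F Hw (proj1 (small_card_lt F) sF)).
Qed.

Definition indep' (I : set (set nat)) :=
  forall D h, finite_set D -> D `<=` I -> infinite_set (Ih D h).
Definition pos (I : set (set nat)) (X : set nat) :=
  forall D h, finite_set D -> D `<=` I -> infinite_set (Ih D h `&` X).
Definition Cap (C : nat -> set nat) N := [set a | forall j, (j <= N)%N -> C j a].

Lemma indep_indep' I : independent I -> indep' I.
Proof.
move=> [_ H] D h Df DI.
pose A := D `&` [set X | h X = false]; pose B := D `&` [set X | h X = true].
have Af : finite_set A by exact: finite_setIl.
have Bf : finite_set B by exact: finite_setIl.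
have := H A B Af Bf (fun X H => DI X (proj1 H)) (fun X H => DI X (proj1 H)).
have -> : A `&` B = set0.
  by apply/funext => X; apply/propext; split=> // -[[_ hf] [_ ht]]; move: hf ht => /= ->.
move=> /(_ erefl); apply: infinite_sub => x [Hc Hu] X DX /=.
rewrite /setpow; case hX: (h X).
  by move=> Xx; apply: Hu; exists X.
by apply: Hc.
Qed.

Lemma indep'_indep I : indep' I -> independent I.
Proof.
move=> H; split.
  move=> A IA; have := H [set A] (fun _ => false) (finite_set1 A).
  by rewrite /Ih bigcap_set1; apply => ? ->.
move=> A B Af Bf AI BI AB.
have := H (A `|` B) (fun X => `[< B X >]).
rewrite finite_setU => /(_ (conj Af Bf)).
have ABI : A `|` B `<=` I by move=> X [/AI|/BI].
move=> /(_ ABI); apply: infinite_sub => x Hx; split.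
  move=> X AX; have := Hx X (or_introl AX); rewrite /setpow.
  case: asboolP => // BX; exfalso.
  by have : (A `&` B) X by []; rewrite AB.
move=> [X BX Xx]; have := Hx X (or_intror BX); rewrite /setpow.
by case: asboolP.
Qed.

Lemma indep'_sub I J : I `<=` J -> indep' J -> indep' I.
Proof. by move=> IJ H D h Df DI; apply: H => // X /DI /IJ. Qed.

Lemma Ih_sub D D' h h' : ff_ext D h D' h' -> Ih D' h' `<=` Ih D h.
Proof. by move=> [DD' e] x Hx X DX; rewrite -e //; apply: Hx; exact: DD'. Qed.

Lemma fil_pos I X : indep' I -> density_filter I X -> pos I X.
Proof.
move=> HI [_ HX] D h Df DI.
have [D' [h' [[D'f D'I] [ext fin]]]] := HX D h (conj Df DI).
have Hi := HI D' h' D'f D'I.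
apply: (infinite_sub (A := Ih D' h' `&` X)).
  by move=> x [Hx Xx]; split=> //; apply: Ih_sub ext x Hx.
move=> fI; apply: Hi.
have -> : Ih D' h' = (Ih D' h' `\` X) `|` (Ih D' h' `&` X).
  by apply/funext=> x; apply/propext; split=> [Ax|[[]|[]]//];
     case: (pselect (X x)) => Bx; [right|left].
by rewrite finite_setU.
Qed.

Lemma fil_super I Y X : density_filter I Y -> finite_set (Y `\` X) ->
  density_filter I X.
Proof.
move=> [Yi HY] YX; split.
  move=> Xf; apply: Yi.
  have -> : Y = (Y `\` X) `|` (Y `&` X).
    by apply/funext=> x; apply/propext; split=> [Ax|[[]|[]]//];
       case: (pselect (X x)) => Bx; [right|left].
  by rewrite finite_setU; split=> //; exact: finite_setIr.
move=> D h FF; have [D' [h' [FF' [ext fin]]]] := HY D h FF.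
exists D', h'; split=> //; split=> //.
apply: (sub_finite_set (B := (Ih D' h' `\` Y) `|` (Y `\` X))).
  by move=> x [Ix nX]; case: (pselect (Y x)) => Yx; [right|left].
by rewrite finite_setU.
Qed.

Lemma dens_inf I X : indep' I ->
  (forall D h, FF I D h -> exists D' h', FF I D' h' /\ ff_ext D h D' h' /\
      finite_set (Ih D' h' `\` X)) -> infinite_set X.
Proof.
move=> HI H Xf.
have [D' [h' [[D'f D'I] [_ fin]]]] := H set0 (fun _ => false) (conj (finite_set0 _) (sub0set _)).
apply: (HI D' h' D'f D'I).
apply: (sub_finite_set (B := (Ih D' h' `\` X) `|` X)).
  by move=> x Ix; case: (pselect (X x)) => Xx; [right|left].
by rewrite finite_setU.
Qed.

Lemma fil_inter I X1 X2 : indep' I -> density_filter I X1 -> density_filter I X2 ->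
  density_filter I (X1 `&` X2).
Proof.
move=> HI [_ H1] [_ H2].
suff dens : forall D h, FF I D h -> exists D' h', FF I D' h' /\ ff_ext D h D' h' /\
      finite_set (Ih D' h' `\` (X1 `&` X2)).
  by split=> //; exact: dens_inf dens.
move=> D h FF; have [D1 [h1 [FF1 [e1 f1]]]] := H1 D h FF.
have [D2 [h2 [FF2 [e2 f2]]]] := H2 D1 h1 FF1.
exists D2, h2; split=> //; split.
  case: e1 e2 => [s1 q1] [s2 q2]; split; first by move=> ? /s1 /s2.
  by move=> A DA; rewrite q2 ?q1 //; exact: s1.
apply: (sub_finite_set (B := (Ih D1 h1 `\` X1) `|` (Ih D2 h2 `\` X2))).
  move=> x [Ix nX]; case: (pselect (X1 x)) => X1x; last by left; split => //; exact: Ih_sub e2 _ Ix.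
  by right; split => // X2x; apply: nX.
by rewrite finite_setU.
Qed.

Lemma fil_mono I J X : I `<=` J -> density_filter I X -> density_filter J X.
Proof.
move=> IJ [Xi HX]; split=> // D h [Df DJ].
have FF1 : FF I (D `&` I) h by split; [exact: finite_setIl | by move=> A []].
have [D1 [h1 [[D1f D1I] [[s1 e1] fin]]]] := HX _ _ FF1.
pose h' A := if pselect (D A) then h A else h1 A.
exists (D `|` D1), h'; split; [split|split].
- by rewrite finite_setU.
- by move=> A [/DJ|/D1I/IJ].
- split; first by move=> A DA; left.
  by move=> A DA; rewrite /h'; case: pselect.
apply: sub_finite_set fin => x [Ix nX]; split=> // A D1A.
have := Ix A (or_intror D1A); rewrite /h'; case: pselect => // DA.
by rewrite e1 //; split=> //; exact: D1I.
Qed.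

Lemma fil_setT I : density_filter I setT.
Proof.
split; first exact: infinite_nat.
move=> D h FF; exists D, h; split=> //; split; first by split.
by rewrite setDT; exact: finite_set0.
Qed.

Lemma fresh (Z : nat -> set nat) (D : set (set nat)) : injective Z -> finite_set D ->
  exists m, ~ D (Z m).
Proof.
move=> Zi Df.
have : finite_set (Z @^-1` D) by apply: finite_preimage => // x y _ _; exact: Zi.
move=> /fin_bounded[n Hn]; exists n => /Hn; by rewrite ltnn.
Qed.

Lemma dens_Z I (Z : nat -> set nat) Y : injective Z -> (forall m, Z m `<=` Y) ->
  infinite_set Y -> density_filter (I `|` range Z) Y.
Proof.
move=> Zi ZY Yi; split=> // D h [Df DI].
have [m Dm] := fresh Zi Df.
pose h' A := if pselect (A = Z m) then false else h A.
exists (D `|` [set Z m]), h'; split; [split|split].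
- by rewrite finite_setU; split=> //; exact: finite_set1.
- by move=> A [/DI|->]; [|right; exists m].
- split; first by move=> A DA; left.
  by move=> A DA; rewrite /h'; case: pselect => // AZ; rewrite AZ in DA.
suff -> : Ih (D `|` [set Z m]) h' `\` Y = set0 by exact: finite_set0.
apply/funext => x; apply/propext; split=> // -[Ix nY]; apply: nY; apply: (ZY m).
by have := Ix (Z m) (or_intror erefl); rewrite /h'; case: pselect.
Qed.

Lemma Cap_const X N : Cap (fun _ => X) N = X.
Proof. by apply/funext=> a; apply/propext; split=> [/(_ 0%N (leq0n _))|Xa j]. Qed.

Lemma Cap_fil I C N : indep' I -> (forall j, density_filter I (C j)) ->
  density_filter I (Cap C N).
Proof.
move=> HI HC; elim: N => [|N IH].
  suff -> : Cap C 0 = C 0%N by [].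
  by apply/funext=> a; apply/propext; split=> [/(_ 0%N (leq0n _))|Ca j]; rewrite ?leqn0 => // /eqP->.
suff -> : Cap C N.+1 = Cap C N `&` C N.+1 by exact: fil_inter.
apply/funext=> a; apply/propext; split=> [H|[H1 H2] j].
  by split; [move=> j jN; apply: H; exact: leqW|apply: H].
by rewrite leq_eqVlt => /orP[/eqP->//|]; rewrite ltnS; exact: H1.
Qed.

Definition Entry := (nat * seq bool * nat)%type.
Definition Block := (nat * seq Entry)%type.
Definition cell (E : set (set nat)) (x : nat) := [set a | forall B, E B -> B x -> B a].
Definition valid (q : nat -> nat) (k : nat) (s : seq Entry) : Prop :=
  (forall x sg, (x < k)%N -> size sg = k -> exists a, ((x, sg), a) \in s) /\
  uniq [seq q e.2 | e <- s] /\
  (forall e, e \in s -> (k <= e.2)%N /\ forall y, (y < k)%N -> q y <> q e.2).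
Definition UBl (B : set nat) := [set b : Block | forall e, e \in b.2 -> B e.1.1 -> B e.2].
Definition VBl C N := [set b : Block | forall e, e \in b.2 -> Cap C N e.2].
Definition TBl q K := [set b : Block | (K <= b.1)%N /\ valid q b.1 b.2].
Definition dec (n : nat) : Block := odflt (0%N, [::]) (unpickle n).

Lemma decK b : dec (pickle b) = b.
Proof. by rewrite /dec pickleK. Qed.

Fixpoint pats k : seq (seq bool) :=
  if k is k'.+1 then [seq b :: s | b <- [:: true; false], s <- pats k'] else [:: [::]].

Lemma pats_all sg : sg \in pats (size sg).
Proof.
elim: sg => [|b s IH] //=.
by case: b; rewrite /= !mem_cat; apply/orP; [left|right; apply/orP; left]; exact: map_f.
Qed.

Lemma fin_fibers (q : nat -> nat) (F : seq nat) :
  (forall n, finite_set (q @^-1` [set n])) -> finite_set [set a | q a \in F].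
Proof.
move=> Hq; apply: (sub_finite_set (B := \bigcup_(n in [set n | n \in F]) (q @^-1` [set n]))).
  by move=> a qa; exists (q a).
apply: bigcup_finite => //; exact: finite_seq.
Qed.

Lemma build (q : nat -> nat) (cellC : nat -> set nat) (k : nat) (F : seq nat) :
  (forall n, finite_set (q @^-1` [set n])) -> (forall x, infinite_set (cellC x)) ->
  forall (L : seq (nat * seq bool)),
  exists s : seq Entry, [seq e.1 | e <- s] = L /\ uniq [seq q e.2 | e <- s] /\
   (forall e, e \in s -> cellC e.1.1 e.2 /\ (k <= e.2)%N /\ q e.2 \notin F).
Proof.
move=> Hq Hc; elim=> [|p L [s [sL [su sP]]]]; first by exists [::].
pose Fb := [set a | (a < k)%N] `|` [set a | q a \in F ++ [seq q e.2 | e <- s]].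
have Fbf : finite_set Fb by rewrite finite_setU; split; [exact: finite_II|exact: fin_fibers].
have [a [ca na]] := infinite_nonempty (infinite_setD_fin (Hc p.1) Fbf).
exists ((p, a) :: s); split; first by rewrite /= sL.
have ka : (k <= a)%N by rewrite leqNgt; apply/negP => ak; apply: na; left.
have qa : q a \notin F ++ [seq q e.2 | e <- s] by apply/negP => H; apply: na; right.
move: qa; rewrite mem_cat negb_or => /andP[qF qs].
split; first by rewrite /= qs.
by move=> e; rewrite inE => /orP[/eqP->|/sP//].
Qed.

Lemma block_exists (q : nat -> nat) (C : nat -> set nat) (E : set (set nat)) N K k :
  (forall n, finite_set (q @^-1` [set n])) ->
  (forall x, infinite_set (cell E x `&` Cap C N)) -> (K <= k)%N ->
  exists b : Block, b.1 = k /\ TBl q K b /\ VBl C N b /\ forall B, E B -> UBl B b.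
Proof.
move=> Hq Hc Kk.
have [s [sL [su sP]]] := build k [seq q y | y <- iota 0 k] Hq Hc
  [seq (x, sg) | x <- iota 0 k, sg <- pats k].
exists (k, s); split=> //; split; last split.
- split=> //; split; last split=> //.
  + move=> x sg /= xk sgk.
    have : (x, sg) \in [seq e.1 | e <- s].
      by rewrite sL; apply: allpairs_f; rewrite ?mem_iota ?add0n // -sgk pats_all.
    by move=> /mapP[[[x' sg'] a] es /= [-> ->]]; exists a.
  + move=> e es; have [_ [ka qF]] := sP e es; split=> // y yk qy.
    by move: qF; rewrite -qy map_f // mem_iota add0n.
- by move=> e es; have [[_ ?] _] := sP e es.
- by move=> B EB e es /=; have [[H _] _] := sP e es; apply: H.
Qed.

Definition BB (I : set (set nat)) := I `|` [set ~` A | A in I].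
Definition Wfam I C q := [set dec @^-1` UBl B | B in BB I] `|`
  range (fun N => dec @^-1` VBl C N) `|` range (fun K => dec @^-1` TBl q K).

Lemma Wfam_small I C q : small I -> small (Wfam I C q).
Proof.
move=> sI; apply: small_U; last exact: small_range.
apply: small_U; last exact: small_range.
by apply: small_image; apply: small_U => //; exact: small_image.
Qed.

Lemma cell_pos I C N E x : pos I (Cap C N) -> finite_set E -> E `<=` BB I ->
  infinite_set (cell E x `&` Cap C N).
Proof.
move=> HP Ef EB.
pose D := [set A | I A /\ (E A \/ E (~` A))].
pose h A := `[< ~ A x >].
have Df : finite_set D.
  apply: (sub_finite_set (B := E `|` [set ~` B | B in E])).
    by move=> A [_ [EA|EA]]; [left|right; exists (~` A); rewrite ?setCK].
  by rewrite finite_setU; split => //; exact: finite_image.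
have := HP D h Df (fun A H => proj1 H); apply: infinite_sub => a [Ia Ca]; split=> //.
move=> B EB' Bx; case: (EB B EB') => [IB|[A IA AB]].
  by have := Ia B (conj IB (or_introl EB')); rewrite /setpow /h; case: asboolP.
rewrite -AB in EB' Bx *.
by have := Ia A (conj IA (or_intror EB')); rewrite /setpow /h; case: asboolP.
Qed.

Lemma VBl_mono C N N' : (N' <= N)%N -> VBl C N `<=` VBl C N'.
Proof. by move=> NN b H e es j jN; apply: H => //; exact: leq_trans jN NN. Qed.

Lemma TBl_mono q K K' : (K' <= K)%N -> TBl q K `<=` TBl q K'.
Proof. by move=> KK b [Kb vb]; split=> //; exact: leq_trans KK Kb. Qed.

Definition Sblk (I : set (set nat)) (C : nat -> set nat) (q : nat -> nat) (E : set (set nat)) (N K : nat) :=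
  [set b : Block | (forall B, E B -> UBl B b) /\ VBl C N b /\ TBl q K b].

Lemma reduceW I C q (s : seq (set nat)) : (forall X, X \in s -> Wfam I C q X) ->
  exists E N K, finite_set E /\ E `<=` BB I /\
    dec @^-1` Sblk I C q E N K `<=` [set a | forall X, X \in s -> X a].
Proof.
elim: s => [|X s IH] Hs.
  by exists set0, 0%N, 0%N; split; [exact: finite_set0|split=> //].
have [|E [N [K [Ef [EB Hsub]]]]] := IH; first by move=> Y Ys; apply: Hs; rewrite in_cons; apply/orP; right.
have := Hs X (mem_head _ _); move=> [[[B BB' <-]|[N' _ <-]]|[K' _ <-]].
- exists (E `|` [set B]), N, K; split; first by rewrite finite_setU; split=> //; exact: finite_set1.
  split; first by move=> A [/EB|->].
  move=> a [HU [HV HT]] Y /predU1P[->|Ys].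
    by apply: HU; right.
  by apply: Hsub => //; split=> // B' EB'; apply: HU; left.
- exists E, (maxn N N'), K; split=> //; split=> //.
  move=> a [HU [HV HT]] Y /predU1P[->|Ys].
    exact: (VBl_mono (leq_maxr N N') HV).
  by apply: Hsub => //; split=> //; split=> //; exact: (VBl_mono (leq_maxl N N') HV).
- exists E, N, (maxn K K'); split=> //; split=> //.
  move=> a [HU [HV HT]] Y /predU1P[->|Ys].
    exact: (TBl_mono (leq_maxr K K') HT).
  by apply: Hsub => //; split=> //; split=> //; exact: (TBl_mono (leq_maxl K K') HT).
Qed.

Lemma Sblk_inf I C q E N K : (forall n, finite_set (q @^-1` [set n])) ->
  pos I (Cap C N) -> finite_set E -> E `<=` BB I ->
  infinite_set (dec @^-1` Sblk I C q E N K).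
Proof.
move=> Hq HP Ef EB fin.
have f1 : finite_set (pickle @` Sblk I C q E N K).
  by apply: sub_finite_set fin => _ [b Sb <-]; rewrite /= decK.
have f2 : finite_set (Sblk I C q E N K).
  apply: (sub_finite_set (B := pickle @^-1` (pickle @` Sblk I C q E N K))).
    by move=> b Sb; exists b.
  by apply: finite_preimage => // x y _ _; exact: pickle_inj.
have [n Hn] := fin_bounded (finite_image fst f2).
have [b [b1 [HT [HV HU]]]] := block_exists (k := maxn K n) Hq
  (fun x => @cell_pos I C N E x HP Ef EB) (leq_maxl K n).
have := Hn b.1 (ex_intro2 _ _ b (conj HU (conj HV HT)) erefl).
by rewrite b1 ltnNge leq_maxr.
Qed.

Lemma SFIP_W I C q : (forall n, finite_set (q @^-1` [set n])) ->
  (forall N, pos I (Cap C N)) -> SFIP (Wfam I C q).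
Proof.
move=> Hq HP G Gf GW; have [s Gs] := finite_seqE Gf.
have [|E [N [K [Ef [EB Hsub]]]]] := reduceW (I := I) (C := C) (q := q) (s := s).
  by move=> X Xs; apply: GW; rewrite Gs.
apply: (@infinite_sub _ (dec @^-1` Sblk I C q E N K)); last exact: Sblk_inf.
by move=> a /Hsub Ha X GX; apply: Ha; move: GX; rewrite Gs.
Qed.

Definition bmax (b : Block) := \max_(e <- b.2) e.2.
Fixpoint chn (pick : nat -> nat -> nat) (i : nat) : nat * nat :=
  if i is i'.+1 then
    let p := chn pick i' in let b' := maxn p.2.+1 (bmax (dec p.1)).+1 in (pick b' p.1.+1, b')
  else (pick 0%N 0%N, 0%N).
Definition yy pick i := (chn pick i).1.
Definition bb pick i := (chn pick i).2.
Definition blk pick i := (dec (yy pick i)).2.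
Definition lev pick i := (dec (yy pick i)).1.
Definition Yset pick := [set a | exists i e, e \in blk pick i /\ e.2 = a].
Definition Zset pick m := [set a | exists i e, e \in blk pick i /\ e.2 = a /\ nth false e.1.2 m].

Definition pick_spec (q : nat -> nat) (Y0 : set nat) (pick : nat -> nat -> nat) :=
  forall K L, (L <= pick K L)%N /\ Y0 (pick K L) /\ TBl q K (dec (pick K L)).

Lemma yy_spec q Y0 pick : pick_spec q Y0 pick -> forall i,
  Y0 (yy pick i) /\ TBl q (bb pick i) (dec (yy pick i)).
Proof.
move=> Hp [|i]; first by have [_ H] := Hp 0%N 0%N.
rewrite /yy /bb /=.
set p := chn pick i; set b' := maxn _ _.
by have [_ H] := Hp b' p.1.+1.
Qed.

Lemma yy_S q Y0 pick : pick_spec q Y0 pick -> forall i, (yy pick i < yy pick i.+1)%N.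
Proof. by move=> Hp i; exact: (Hp _ _).1. Qed.

Lemma yy_lt q Y0 pick : pick_spec q Y0 pick -> forall i j, (i < j)%N -> (yy pick i < yy pick j)%N.
Proof.
move=> Hp i; elim=> [//|j IH]; rewrite ltnS leq_eqVlt => /orP[/eqP->|ij].
  exact: yy_S Hp _.
by apply: ltn_trans (IH ij) (yy_S Hp j).
Qed.

Lemma yy_inj q Y0 pick : pick_spec q Y0 pick -> injective (yy pick).
Proof.
move=> Hp i j e; case: (ltngtP i j) => // ij; move: (yy_lt Hp ij); by rewrite e ltnn.
Qed.

Lemma bb_ge pick i : (i <= bb pick i)%N.
Proof.
elim: i => [//|i IH]; rewrite /bb /=.
by apply: leq_trans (leq_maxl _ _); rewrite ltnS.
Qed.

Lemma bb_mono pick i j : (i <= j)%N -> (bb pick i <= bb pick j)%N.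
Proof.
elim: j => [|j IH]; first by rewrite leqn0 => /eqP->.
rewrite leq_eqVlt => /orP[/eqP->//|]; rewrite ltnS => ij.
apply: leq_trans (IH ij) _; rewrite /bb /=.
by apply: leq_trans (leq_maxl _ _).
Qed.

Lemma entry_bounds q Y0 pick : pick_spec q Y0 pick -> forall i e, e \in blk pick i ->
  [/\ (bb pick i <= lev pick i)%N, (lev pick i <= e.2)%N & (e.2 < bb pick i.+1)%N].
Proof.
move=> Hp i e ei; have [_ [bl [_ [_ H]]]] := yy_spec Hp i.
split=> //; first by have [] := H e ei.
rewrite /bb /=; apply: leq_trans (leq_maxr _ _); rewrite ltnS.
by apply: (@leq_bigmax_seq _ _ xpredT (fun e : Entry => e.2)).
Qed.

Lemma uniq_map_inj {T U : eqType} (f : T -> U) (s : seq T) :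
  uniq [seq f e | e <- s] -> forall e e', e \in s -> e' \in s -> f e = f e' -> e = e'.
Proof.
elim: s => [//|x s IH] /= /andP[xs us] e e'; rewrite !in_cons.
move=> /orP[/eqP->|es] /orP[/eqP->|e's] //= fe.
- by move: xs; rewrite fe map_f.
- by move: xs; rewrite -fe map_f.
- exact: IH.
Qed.

Lemma unique_entry q Y0 pick : pick_spec q Y0 pick -> forall i j e e',
  e \in blk pick i -> e' \in blk pick j -> q e.2 = q e'.2 -> i = j /\ e = e'.
Proof.
move=> Hp.
have cross : forall i j e e', (i < j)%N -> e \in blk pick i -> e' \in blk pick j ->
    q e.2 <> q e'.2.
  move=> i j e e' ij ei e'j.
  have [_ _ h1] := entry_bounds Hp ei; have [h2 _ _] := entry_bounds Hp e'j.
  have [_ [_ [_ [_ H]]]] := yy_spec Hp j; have [_ H'] := H e' e'j; apply: H'.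
  apply: leq_trans h2; apply: leq_trans h1 _; exact: bb_mono.
move=> i j e e' ei e'j qe; case: (ltngtP i j) => ij.
- by exfalso; exact: cross ij ei e'j qe.
- by exfalso; exact: cross ij e'j ei (esym qe).
- subst j; split=> //; have [_ [_ [_ [H _]]]] := yy_spec Hp i.
  exact: (uniq_map_inj H).
Qed.

Lemma bound_from q Y0 pick : pick_spec q Y0 pick -> forall X, finite_set (Y0 `\` X) ->
  exists i0, forall i, (i0 <= i)%N -> X (yy pick i).
Proof.
move=> Hp X fin.
have : finite_set (yy pick @^-1` (Y0 `\` X)).
  by apply: finite_preimage => // a b _ _; exact: yy_inj.
move=> /fin_bounded[i0 Hi0]; exists i0 => i ii0.
apply: contrapT => nX; have := Hi0 i (conj (yy_spec Hp i).1 nX).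
by rewrite ltnNge ii0.
Qed.

Lemma Y_almost q Y0 pick C n : pick_spec q Y0 pick ->
  finite_set (Y0 `\` dec @^-1` VBl C n) -> finite_set (Yset pick `\` C n).
Proof.
move=> Hp fin; have [i0 Hi0] := bound_from Hp fin.
apply: (sub_finite_set (B := \bigcup_(i in `I_i0) [set e.2 | e in [set e | e \in blk pick i]])).
  move=> a [[i [e [ei <-]]] nC]; exists i; last by exists e.
  rewrite /= ltnNge; apply/negP => ii0; apply: nC.
  by have := Hi0 i ii0 e ei n (leqnn n).
apply: bigcup_finite; first exact: finite_II.
by move=> i _; apply: finite_image; exact: finite_seq.
Qed.

Lemma Y_sel q Y0 pick : pick_spec q Y0 pick ->
  forall a a', Yset pick a -> Yset pick a' -> q a = q a' -> a = a'.
Proof.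
move=> Hp a a' [i [e [ei <-]]] [j [e' [e'j <-]]] qe.
by have [_ ->] := unique_entry Hp ei e'j qe.
Qed.

Lemma Z_sub pick m : Zset pick m `<=` Yset pick.
Proof. by move=> a [i [e [ei [ea _]]]]; exists i, e. Qed.

Lemma setpow_BB I A b : I A -> BB I (setpow A b).
Proof. by case: b => IA /=; [right; exists A|left]. Qed.

Lemma cellZ I q Y0 pick : pick_spec q Y0 pick -> indep' I ->
  (forall B, BB I B -> finite_set (Y0 `\` dec @^-1` UBl B)) ->
  forall D h, finite_set D -> D `<=` I -> forall (M : seq nat) (ev : nat -> bool),
  infinite_set (Ih D h `&` [set a | forall m, m \in M -> setpow (Zset pick m) (ev m) a]).
Proof.
move=> Hp HI hU D h Df DI M ev.
have [x Ihx] := infinite_nonempty (HI D h Df DI).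
pose E := [set setpow A (h A) | A in D].
have Ef : finite_set E by exact: finite_image.
pose XU := \bigcap_(B in E) (dec @^-1` UBl B).
have fXU : finite_set (Y0 `\` XU).
  apply: (sub_finite_set (B := \bigcup_(B in E) (Y0 `\` dec @^-1` UBl B))).
    move=> a [Ya nX]; apply: contrapT => H; apply: nX => B EB.
    by apply: contrapT => nB; apply: H; exists B.
  apply: bigcup_finite => // B [A DA <-]; apply: hU; apply: setpow_BB; exact: DI.
have [i1 Hi1] := bound_from Hp fXU.
apply: unbounded_infinite => n.
pose i := (i1 + n + x.+1 + (\max_(m <- M) m).+1)%N.
have [_ [bl [Hv _]]] := yy_spec Hp i.
have il : (i <= lev pick i)%N by apply: leq_trans (bb_ge pick i) bl.
pose sg := mkseq (fun m => ~~ ev m) (lev pick i).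
have hx : (x < i)%N by rewrite /i; lia.
have hn : (n <= i)%N by rewrite /i; lia.
have hM : (\max_(m <- M) m < i)%N by rewrite /i; lia.
have xl : (x < lev pick i)%N by apply: leq_trans il.
have [a ea] := Hv x sg xl (size_mkseq _ _).
have [_ la _] := entry_bounds Hp ea.
exists a; split.
  by apply: leq_trans la; apply: leq_trans il.
have ii1 : (i1 <= i)%N by rewrite /i; lia.
split.
  move=> A DA; have EB : E (setpow A (h A)) by exists A.
  exact: (Hi1 i ii1 _ EB _ ea (Ihx A DA)).
move=> m mM.
have ml : (m < lev pick i)%N.
  apply: leq_trans il; apply: leq_ltn_trans hM.
  by apply: (@leq_bigmax_seq _ _ xpredT (fun m => m)).
case evm: (ev m) => /=.
  move=> [j [e' [e'j [e'a nm]]]].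
  have := unique_entry Hp e'j ea; rewrite e'a => /(_ erefl) [_ ee].
  by move: nm; rewrite ee /= nth_mkseq // evm.
exists i, ((x, sg), a); split=> //; split=> //.
by rewrite /= nth_mkseq // evm.
Qed.

Lemma Ih0 h : Ih set0 h = setT.
Proof. by rewrite /Ih bigcap_set0. Qed.

Lemma Z_inj I q Y0 pick : pick_spec q Y0 pick -> indep' I ->
  (forall B, BB I B -> finite_set (Y0 `\` dec @^-1` UBl B)) -> injective (Zset pick).
Proof.
move=> Hp HI hU m m' E; apply: contrapT => mm'.
have := cellZ Hp HI hU (h := fun _ => false) (M := [:: m; m']) (ev := fun j => j == m') (finite_set0 _) (sub0set _).
move=> /infinite_nonempty[a [_ Ha]].
have h1 := Ha m (mem_head _ _).
have h2 : setpow (Zset pick m') (m' == m') a by apply: Ha; rewrite !inE eqxx orbT.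
move: h1 h2; rewrite /= eqxx; case: eqP => // _; rewrite E => ? []; done.
Qed.

Lemma Z_infinite I q Y0 pick : pick_spec q Y0 pick -> indep' I ->
  (forall B, BB I B -> finite_set (Y0 `\` dec @^-1` UBl B)) -> infinite_set (Yset pick).
Proof.
move=> Hp HI hU.
have := cellZ Hp HI hU (h := fun _ => false) (M := [:: 0%N]) (ev := fun _ => false) (finite_set0 _) (sub0set _).
apply: infinite_sub => a [_ /(_ 0%N (mem_head _ _))]; exact: Z_sub.
Qed.

Lemma indep_Z I q Y0 pick : pick_spec q Y0 pick -> indep' I ->
  (forall B, BB I B -> finite_set (Y0 `\` dec @^-1` UBl B)) ->
  indep' (I `|` range (Zset pick)).
Proof.
move=> Hp HI hU D h Df DIZ.
have [s2 Hs2] := finite_seqE (finite_setD I Df).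
pose idx A := if pselect (exists m, Zset pick m = A) is left H then proj1_sig (cid H) else 0%N.
have idxP : forall A, (exists m, Zset pick m = A) -> Zset pick (idx A) = A.
  by move=> A H; rewrite /idx; case: pselect => // H'; case: cid.
have := cellZ Hp HI hU (h := h) (M := [seq idx A | A <- s2]) (ev := fun m => h (Zset pick m))
  (finite_setIl I Df) (fun A H => proj2 H).
apply: infinite_sub => a [Ia Za] A DA.
case: (pselect (I A)) => IA; first exact: Ia.
have As2 : A \in s2 by have : (D `\` I) A by []; rewrite Hs2.
have := Za (idx A) (map_f _ As2).
have HA : exists m, Zset pick m = A.
  by case: (DIZ A DA) => // -[m _ <-]; exists m.
by rewrite idxP.
Qed.

Definition good (I : set (set nat)) (C : nat -> set nat) (q : nat -> nat)
  (Y : set nat) (Z : nat -> set nat) :=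
  indep' (I `|` range Z) /\ density_filter (I `|` range Z) Y /\
  (forall n, finite_set (Y `\` C n)) /\ (forall a a', Y a -> Y a' -> q a = q a' -> a = a').

Lemma UB (pc : p_eq_c) I C q : small I -> indep' I ->
  (forall n, finite_set (q @^-1` [set n])) -> (forall N, pos I (Cap C N)) ->
  exists Y Z, good I C q Y Z.
Proof.
move=> sI HI Hq HP.
have [Y0 [Y0i Y0W]] := PI pc (@Wfam_small I C q sI) (SFIP_W Hq HP).
have hpick : forall K L, exists y, (L <= y)%N /\ Y0 y /\ TBl q K (dec y).
  move=> K L.
  have fin : finite_set (Y0 `\` dec @^-1` TBl q K) by apply: Y0W; right; exists K.
  have [y [Ly [Yy Ty]]] := infinite_unbounded (infinite_setD_fin Y0i fin) L.
  exists y; split=> //; split=> //; apply: contrapT => nT; apply: Ty; by split.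
pose pick K L := proj1_sig (cid (hpick K L)).
have Hp : pick_spec q Y0 pick by move=> K L; rewrite /pick; case: cid.
have hU : forall B, BB I B -> finite_set (Y0 `\` dec @^-1` UBl B).
  by move=> B BB'; apply: Y0W; left; left; exists B.
have hV : forall N, finite_set (Y0 `\` dec @^-1` VBl C N).
  by move=> N; apply: Y0W; left; right; exists N.
exists (Yset pick), (Zset pick); split; first exact: indep_Z Hp HI hU.
split; first apply: dens_Z.
- exact: Z_inj Hp HI hU.
- exact: Z_sub.
- exact: Z_infinite Hp HI hU.
split; first by move=> n; exact: Y_almost Hp (hV n).
exact: Y_sel Hp.
Qed.

Definition Task := (nat -> set nat)%type.

Lemma wo_min (R : rel Task) : wochoice.well_order R -> forall S : set Task,
  (exists x, S x) -> exists z, S z /\ forall x, S x -> R z x.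
Proof.
move=> HR S [x Sx].
have [|z [[zS zlb] _]] := HR (fun y => `[< S y >]).
  by exists x; rewrite unfold_in; apply/asboolP.
exists z; split; first by move: zS; rewrite unfold_in => /asboolP.
by move=> y Sy; apply: zlb; rewrite unfold_in; apply/asboolP.
Qed.

Lemma wo_props (R : rel Task) : wochoice.well_order R ->
  (forall x y, R x y \/ R y x) /\ (forall x y, R x y -> R y x -> x = y) /\
  (forall x y z, R x y -> R y z -> R x z).
Proof.
move=> HR.
have tot : forall x y, R x y \/ R y x.
  move=> x y; have [|z [Sz Hz]] := wo_min HR (S := [set w | w = x \/ w = y]).
    by exists x; left.
  by case: Sz => Ez; subst z; [left; apply: Hz; right|right; apply: Hz; left].
have anti : forall x y, R x y -> R y x -> x = y.
  move=> x y Rxy Ryx.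
  have [|z [[zS zlb] zu]] := HR (fun w => `[< w = x \/ w = y >]).
    by exists x; rewrite unfold_in; apply/asboolP; left.
  have mx : wochoice.minimum_of R (fun w => `[< w = x \/ w = y >]) x.
    split; first by rewrite unfold_in; apply/asboolP; left.
    move=> w; rewrite unfold_in => /asboolP[->|->] //.
    by case: (tot x x) => ->.
  have my : wochoice.minimum_of R (fun w => `[< w = x \/ w = y >]) y.
    split; first by rewrite unfold_in; apply/asboolP; right.
    move=> w; rewrite unfold_in => /asboolP[->|->] //.
    by case: (tot y y) => ->.
  by rewrite -(zu _ mx) -(zu _ my).
split=> //; split=> // x y z Rxy Ryz.
have [|m [Sm Hm]] := wo_min HR (S := [set w | w = x \/ w = y \/ w = z]).
  by exists x; left.
case: Sm => [Em|[Em|Em]]; subst m.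
- by apply: Hm; right; right.
- by rewrite (anti x y Rxy (Hm x (or_introl erefl))).
- by rewrite (anti y z Ryz (Hm y (or_intror (or_introl erefl)))) in Rxy.
Qed.

Lemma Acc_inv {A B} (R : B -> B -> Prop) (f : A -> B) (x : A) :
  Acc R (f x) -> Acc (fun a b => R (f a) (f b)) x.
Proof.
move Efx : (f x) => y Ay; elim: Ay x Efx => y' _ IH x Efx.
by constructor => a Ra; apply: (IH (f a)) => //; rewrite -Efx.
Qed.

Lemma wo_c : exists lt : Task -> Task -> Prop, well_founded lt /\
  (forall x y z, lt x y -> lt y z -> lt x z) /\
  (forall x y, lt x y \/ x = y \/ lt y x) /\ (forall y, small [set x | lt x y]).
Proof.
have [R HR] := wochoice.well_ordering_principle (nat -> set nat).
have [tot [anti trans]] := wo_props HR.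
pose lt0 x y := R x y /\ x <> y.
have wf0 : well_founded lt0.
  move=> a; apply: contrapT => na.
  have [|z [nz zmin]] := wo_min HR (S := [set b | ~ Acc lt0 b]); first by exists a.
  apply: nz; constructor => y [Ryz yz]; apply: contrapT => ny.
  by apply: yz; apply: anti => //; apply: zmin.
have tr0 : forall x y z, lt0 x y -> lt0 y z -> lt0 x z.
  move=> x y z [Rxy xy] [Ryz yz]; split; first exact: trans Rxy Ryz.
  by move=> xz; subst z; apply: yz; apply: anti.
have tri0 : forall x y, lt0 x y \/ x = y \/ lt0 y x.
  move=> x y; case: (pselect (x = y)) => xy; first by right; left.
  by case: (tot x y) => H; [left|right; right]; split=> // yx; apply: xy.
case: (pselect (exists z, ~ small [set x | lt0 x z])) => [Hz|Hz]; last first.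
  exists lt0; split=> //; split=> //; split=> // y; apply: contrapT => ns.
  by apply: Hz; exists y.
have [z0 [nz0 z0min]] := wo_min HR Hz.
have [g [gS gi]] : big [set x | lt0 x z0] by apply: contrapT.
pose emb x := g (ew x).
have embi : injective emb by move=> x y /gi /ew_inj.
exists (fun x y => lt0 (emb x) (emb y)); split.
  by move=> x; apply: Acc_inv; exact: wf0.
split; first by move=> x y z; exact: tr0.
split.
  by move=> x y; case: (tri0 (emb x) (emb y)) => [H|[/embi H|H]]; auto.
move=> y; apply: (small_inj (f := emb)) => //.
apply: (@small_sub _ _ [set x | lt0 x (emb y)]); first by move=> _ [x H <-].
apply: contrapT => ns.
have Rz := z0min (emb y) ns.
have [Ryz yz] := gS (ew y).
by apply: yz; apply: anti.
Qed.

Definition choose_gd (I : set (set nat)) (C : nat -> set nat) (q : nat -> nat) :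
  option (nat -> set nat) :=
  match pselect (exists p : set nat * (nat -> set nat), good I C q p.1 p.2) with
  | left H => Some (proj1_sig (cid H)).2
  | right _ => None
  end.

Definition qP (t : Task) (a : nat) : nat :=
  if pselect (exists n, t n a) is left H then proj1_sig (cid H) else 0%N.

Definition Ptask I (t : Task) := forall N, pos I (Cap t N).

Definition stage (I : set (set nat)) (t : Task) : option (nat -> set nat) :=
  if pselect (Ptask I t) then choose_gd I t id
  else if pselect (finite_partition t) then choose_gd I (fun _ => setT) (qP t)
  else None.

Definition AddOf (o : option (nat -> set nat)) : set (set nat) :=
  if o is Some z then range z else set0.

Lemma choose_gd_indep I C q : indep' I -> indep' (I `|` AddOf (choose_gd I C q)).
Proof.
move=> HI; rewrite /choose_gd; case: pselect => [H|H] /=; last by rewrite setU0.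
by have [Hi _] := proj2_sig (cid H).
Qed.

Lemma stage_indep I t : indep' I -> indep' (I `|` AddOf (stage I t)).
Proof.
move=> HI; rewrite /stage; case: pselect => H1; first exact: choose_gd_indep.
case: pselect => H2; first exact: choose_gd_indep.
by rewrite /= setU0.
Qed.

Lemma choose_gd_spec I C q : (exists Y Z, good I C q Y Z) ->
  exists Y, density_filter (I `|` AddOf (choose_gd I C q)) Y /\
    (forall n, finite_set (Y `\` C n)) /\ (forall a a', Y a -> Y a' -> q a = q a' -> a = a').
Proof.
move=> [Y [Z g]]; rewrite /choose_gd; case: pselect => [H|H]; last first.
  by exfalso; apply: H; exists (Y, Z).
have [_ [? [? ?]]] := proj2_sig (cid H); by exists (proj1_sig (cid H)).1.
Qed.

Lemma qP_spec t : finite_partition t -> forall n a, t n a -> qP t a = n.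
Proof.
move=> [_ [disj _]] n a tna; rewrite /qP; case: pselect => [H|H]; last first.
  by exfalso; apply: H; exists n.
case: cid => m tma /=; apply: contrapT => mn.
have : (t m `&` t n) a by [].
by rewrite disj.
Qed.

Lemma qP_in t : finite_partition t -> forall a, t (qP t a) a.
Proof.
move=> fp a; have [_ [_ cov]] := fp.
have : (\bigcup_n t n) a by rewrite cov.
by move=> [n _ tna]; rewrite (qP_spec fp tna).
Qed.

Lemma stage_P (pc : p_eq_c) I t : Ptask I t -> small I -> indep' I ->
  exists Y, density_filter (I `|` AddOf (stage I t)) Y /\ (forall n, finite_set (Y `\` t n)).
Proof.
move=> HP sI HI; rewrite /stage; case: pselect => // H1.
have [|Y [HY [HC _]]] := choose_gd_spec (I := I) (C := t) (q := id).
  apply: UB => // n; apply: (sub_finite_set (B := [set n])); first by move=> a ->.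
  exact: finite_set1.
by exists Y.
Qed.

Lemma stage_Q (pc : p_eq_c) I t : ~ Ptask I t -> finite_partition t -> small I -> indep' I ->
  exists Y, density_filter (I `|` AddOf (stage I t)) Y /\
    (forall a a', Y a -> Y a' -> qP t a = qP t a' -> a = a').
Proof.
move=> nP fp sI HI; rewrite /stage; case: pselect => // H1; case: pselect => // H2.
have [|Y [HY [_ Hs]]] := choose_gd_spec (I := I) (C := fun _ => setT) (q := qP t).
  apply: UB => //.
    move=> n; apply: (sub_finite_set (B := t n)); last by case: fp.
    by move=> a /= <-; exact: qP_in.
  move=> N D h Df DI; rewrite Cap_const setIT; exact: HI.
by exists Y.
Qed.

Definition Fstage (I0 : set (set nat)) (lt : Task -> Task -> Prop) (tau : Task)
  (rec : forall s, lt s tau -> option (nat -> set nat)) : option (nat -> set nat) :=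
  stage (I0 `|` [set A | exists s (H : lt s tau), AddOf (rec s H) A]) tau.

Definition vals I0 lt (wf : well_founded lt) : Task -> option (nat -> set nat) :=
  Fix wf (fun _ => option (nat -> set nat)) (Fstage I0 (lt := lt)).

Definition Ibef (I0 : set (set nat)) (lt : Task -> Task -> Prop)
  (v : Task -> option (nat -> set nat)) (tau : Task) :=
  I0 `|` [set A | exists s, lt s tau /\ AddOf (v s) A].

Lemma vals_eq I0 lt (wf : well_founded lt) tau :
  vals I0 wf tau = stage (Ibef I0 lt (vals I0 wf) tau) tau.
Proof.
rewrite /vals Fix_eq; last first.
  move=> x f g Hfg; rewrite /Fstage; congr stage.
  apply/funext => A; apply/propext; split.
    by case=> [?|[s [H HA]]]; [left|right; exists s, H; rewrite -Hfg].
  by case=> [?|[s [H HA]]]; [left|right; exists s, H; rewrite Hfg].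
rewrite /Fstage; congr stage; apply/funext => A; apply/propext; split.
  by case=> [?|[s [H HA]]]; [left|right; exists s].
by case=> [?|[s [H HA]]]; [left|right; exists s, H].
Qed.

Lemma fin_stages (I0 : set (set nat)) (lt : Task -> Task -> Prop)
  (v : Task -> option (nat -> set nat)) (P : Task -> Prop) :
  (forall x y z, lt x y -> lt y z -> lt x z) ->
  (forall x y, lt x y \/ x = y \/ lt y x) ->
  forall D, finite_set D -> D `<=` I0 `|` [set A | exists s, P s /\ AddOf (v s) A] ->
  D `<=` I0 \/ exists s, P s /\ D `<=` Ibef I0 lt v s `|` AddOf (v s).
Proof.
move=> tr tri D Df; have [l ->] := finite_seqE Df; elim: l => [|A l IH] Hl.
  by left.
have [|Hl0|[s [Ps Hs]]] := IH; first by move=> X Xl; apply: Hl; rewrite /= in_cons Xl orbT.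
- case: (Hl A (mem_head _ _)) => [IA|[s' [Ps' As']]].
    by left => X /=; rewrite in_cons => /predU1P[->//|/Hl0].
  right; exists s'; split=> // X /=; rewrite in_cons => /predU1P[->|/Hl0 ?]; first by right.
  by left; left.
- case: (Hl A (mem_head _ _)) => [IA|[s' [Ps' As']]].
    right; exists s; split=> // X /=; rewrite in_cons => /predU1P[->|/Hs//]; by left; left.
  case: (tri s s') => [ss'|[es|s's]].
  + right; exists s'; split=> // X /=; rewrite in_cons => /predU1P[->|/Hs]; first by right.
    move=> [[IX|[r [rs HX]]]|HX]; left; [by left|right; exists r; split=> //; exact: tr rs ss'|].
    by right; exists s.
  + subst s'; right; exists s; split=> // X /=; rewrite in_cons => /predU1P[->|/Hs//]; by right.
  + right; exists s; split=> // X /=; rewrite in_cons => /predU1P[->|/Hs//].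
    by left; right; exists s'.
Qed.

Lemma main_ext (pc : p_eq_c) (I0 : set (set nat)) : independent I0 -> card_lt_c I0 ->
  exists I : set (set nat), I0 `<=` I /\ selective I.
Proof.
move=> HI0 cI0.
have sI0 : small I0 by apply/small_card_lt.
have HI0' := indep_indep' HI0.
have [lt [wf [tr [tri segs]]]] := wo_c.
pose v := vals I0 wf.
pose Ifin := I0 `|` [set A | exists s, AddOf (v s) A].
have inv : forall tau, indep' (Ibef I0 lt v tau `|` AddOf (v tau)).
  elim/(well_founded_ind wf) => tau IH.
  have HIb : indep' (Ibef I0 lt v tau).
    move=> D h Df DI.
    case: (@fin_stages I0 lt v (fun s => lt s tau) tr tri D Df DI) => [DI0|[s [st Ds]]].
      exact: HI0'.
    exact: IH s st D h Df Ds.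
  have -> : v tau = stage (Ibef I0 lt v tau) tau by exact: vals_eq.
  exact: stage_indep.
have indIb : forall tau, indep' (Ibef I0 lt v tau).
  by move=> tau; apply: indep'_sub (inv tau) => A HA; left.
have sIb : forall tau, small (Ibef I0 lt v tau).
  move=> tau; pose zz s := if v s is Some z then z else (fun _ : nat => @set0 nat).
  apply: (@small_sub _ _ (I0 `|` \bigcup_n [set zz s n | s in [set s | lt s tau]])).
    move=> A [IA|[s [st HA]]]; first by left.
    right; move: HA; case Evs: (v s) => [z|] // [n _ <-].
    by exists n => //; exists s => //; rewrite /zz Evs.
  apply: small_U => //; apply: small_bigcup => n; apply: small_image; exact: segs.
have subfin : forall tau, Ibef I0 lt v tau `|` AddOf (v tau) `<=` Ifin.
  move=> tau A [[IA|[s [_ HA]]]|HA]; first by left.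
    by right; exists s.
  by right; exists tau.
have Hfin : indep' Ifin.
  move=> D h Df DI.
  case: (@fin_stages I0 lt v (fun _ => True) tr tri D Df) => [|DI0|[s [_ Ds]]].
  - by move=> A /DI [IA|[s HA]]; [left|right; exists s].
  - exact: HI0'.
  - exact: inv s D h Df Ds.
have posdown : forall X tau, pos Ifin X -> pos (Ibef I0 lt v tau) X.
  move=> X tau HX D h Df DI; apply: HX => // A /DI HA; apply: (subfin tau); left; exact: HA.
have stepP : forall tau, Ptask (Ibef I0 lt v tau) tau ->
    exists Y, density_filter Ifin Y /\ (forall n, finite_set (Y `\` tau n)).
  move=> tau HP.
  have [Y [fY fin]] := stage_P pc HP (sIb tau) (indIb tau).
  exists Y; split=> //; apply: fil_mono fY.
  have E : v tau = stage (Ibef I0 lt v tau) tau by exact: vals_eq.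
  by rewrite -E; exact: subfin.
have stepQ : forall tau, ~ Ptask (Ibef I0 lt v tau) tau -> finite_partition tau ->
    exists Y, density_filter Ifin Y /\
      (forall a a', Y a -> Y a' -> qP tau a = qP tau a' -> a = a').
  move=> tau nP fp.
  have [Y [fY sel]] := stage_Q pc nP fp (sIb tau) (indIb tau).
  exists Y; split=> //; apply: fil_mono fY.
  have E : v tau = stage (Ibef I0 lt v tau) tau by exact: vals_eq.
  by rewrite -E; exact: subfin.
exists Ifin; split; first by move=> A IA; left.
split; [|split].
- split; first exact: indep'_indep.
  move=> X Xi D h [Df DI].
  pose X' := X `|` ~` Ih D h.
  case: (pselect (pos Ifin X')) => [pX|npX].
  + have [|Y [fY fin]] := stepP (fun _ => X').
      by move=> N; rewrite Cap_const; exact: posdown.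
    have [_ H] := fil_super fY (fin 0%N).
    have [D' [h' [FF' [ext fin']]]] := H D h (conj Df DI).
    exists D', h'; split=> //; split=> //; left.
    apply: sub_finite_set fin' => x [Ix nX]; split=> // -[Xx|nI] //; apply: nI.
    exact: Ih_sub ext _ Ix.
  + have [D2 [h2 [D2f [D2I fin2]]]] : exists D2 h2, finite_set D2 /\ D2 `<=` Ifin /\
        finite_set (Ih D2 h2 `&` X').
      apply: contrapT => H; apply: npX => D2 h2 D2f D2I fin2; apply: H.
      by exists D2, h2.
    have compat : forall A, D A -> D2 A -> h A = h2 A.
      move=> A DA D2A; apply: contrapT => hne; apply: (Hfin D2 h2 D2f D2I).
      suff <- : Ih D2 h2 `&` X' = Ih D2 h2 by [].
      apply/funext=> x; apply/propext; split=> [[]//|Ix]; split=> //; right => Ihx.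
      have := Ihx A DA; have := Ix A D2A; rewrite /setpow.
      by case: (h A) hne; case: (h2 A).
    pose hc A := if pselect (D A) then h A else h2 A.
    exists (D `|` D2), hc; split; [split|split].
    * by rewrite finite_setU.
    * by move=> A [/DI|/D2I].
    * split; first by move=> A DA; left.
      by move=> A DA; rewrite /hc; case: pselect.
    * right; apply: sub_finite_set fin2 => x [Ix Xx]; split; last by left.
      move=> A D2A; have := Ix A (or_intror D2A); rewrite /hc; case: pselect => // DA.
      by rewrite compat.
- move=> C CF Cc.
  case: (pselect (exists X, C X)) => [[X0 CX0]|nC]; last first.
    exists setT; split; first exact: fil_setT.
    by split; [exact: infinite_nat|move=> X CX; exfalso; apply: nC; exists X].
  have [f fi] := pcard_injP Cc.
  pose t n := if pselect (exists X, C X /\ f X = n) is left H then proj1_sig (cid H) else X0.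
  have tC : forall n, C (t n).
    by move=> n; rewrite /t; case: pselect => // H; case: cid => X [].
  have tf : forall X, C X -> t (f X) = X.
    move=> X CX; rewrite /t; case: pselect => [H|H]; last by exfalso; apply: H; exists X.
    case: cid => X' [CX' fX] /=; apply: fi => //; exact: mem_set.
  have [|Y [fY fin]] := stepP t.
    move=> N; apply: posdown; apply: (fil_pos Hfin); apply: Cap_fil; first exact: Hfin.
    by move=> j; apply: CF; exact: tC.
  exists Y; split=> //; split; first by case: fY.
  by move=> X CX; rewrite -(tf X CX).
- move=> P fp.
  have nP : ~ Ptask (Ibef I0 lt v P) P.
    move=> HP; have := HP 0%N set0 (fun _ => false) (finite_set0 _) (sub0set _).
    rewrite Ih0 setTI; apply; apply: (sub_finite_set (B := P 0%N)).
      by move=> a /(_ 0%N (leqnn 0)).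
    by case: fp.
  have [Y [fY sel]] := stepQ P nP fp.
  exists Y; split=> // n x y Yx Yy Px Py; apply: sel => //.
  by rewrite (qP_spec fp Px) (qP_spec fp Py).
Qed.

Theorem theorem4p1 :
  p_eq_c ->
  (forall I0 : set (set nat), independent I0 -> card_lt_c I0 ->
     exists I : set (set nat), I0 `<=` I /\ selective I) /\
  (exists I : set (set nat), selective I).
Proof.
move=> pc; split; first exact: main_ext.
have [||I [_ sel]] := main_ext pc (I0 := set0); last by exists I.
- apply: indep'_indep => D h Df D0; suff -> : Ih D h = setT by exact: infinite_nat.
  apply/funext => x; apply/propext; split=> // _ A DA; by have := D0 A DA.
- by apply/small_card_lt => -[f [f0 _]]; exact: (f0 set0).
Qed.
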